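(* Let $\psi:\mathbb{R}\to\mathbb{R}$ be of class $\mathcal{C}^1$ such that $\psi'(t)\to-\infty$ as $t\to-\infty$, $\psi'(t)\to+\infty$ as $t\to+\infty$, and $\psi'$ has only finitely many local extrema. Then there exist $0<\theta_0<\theta_1<\pi$ such that for every $\theta\in(0,\pi)\setminus(\theta_0,\theta_1)$, the function $\chi(t)=\psi(t)\sin\theta+t\cos\theta$ satisfies $\chi(t)\to+\infty$ as $t\to\pm\infty$ and $\chi$ has a unique local minimum. *)

(* Defs.v *)
From Stdlib Require Import Reals Lra List.
From Coquelicot Require Import Coquelicot.
Open Scope R_scope.

Definition is_local_min (f : R -> R) (t : R) : Prop :=
  exists d : R, 0 < d /\ forall y : R, Rabs (y - t) < d -> f t <= f y.

Definition is_local_max (f : R -> R) (t : R) : Prop :=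
  exists d : R, 0 < d /\ forall y : R, Rabs (y - t) < d -> f y <= f t.

Definition is_local_extremum (f : R -> R) (t : R) : Prop :=
  is_local_min f t \/ is_local_max f t.

Definition finitely_many_local_extrema (f : R -> R) : Prop :=
  exists l : list R, forall t : R, is_local_extremum f t -> In t l.

Definition chi (psi : R -> R) (theta : R) (t : R) : R :=
  psi t * sin theta + t * cos theta.

(* Main.v *)
Require Import Defs.
From Stdlib Require Import Reals Lra List.
From Coquelicot Require Import Coquelicot.
Open Scope R_scope.

Section Gen.
Variable f : R -> R.
Hypothesis Hc : forall t, continuity_pt f t.
Hypothesis Hm : forall A, exists N, forall x, x < N -> f x < A.
Hypothesis Hp : forall A, exists N, forall x, N < x -> A < f x.

Lemma min_right t : exists p, t <= p /\ forall y, t <= y -> f p <= f y.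
Proof.
  destruct (Hp (f t)) as [N HN].
  destruct (continuity_ab_min f t (Rmax t N) (Rmax_l _ _) (fun c _ => Hc c)) as [p [Hp1 Hp2]].
  exists p; split; [lra|].
  intros y Hy. destruct (Rle_or_lt y (Rmax t N)) as [H|H].
  - apply Hp1; lra.
  - assert (N < y) by (pose proof (Rmax_r t N); lra).
    specialize (HN y H0). specialize (Hp1 t). assert (f p <= f t) by (apply Hp1; pose proof (Rmax_l t N); lra). lra.
Qed.

Lemma max_left p : exists q, q <= p /\ forall y, y <= p -> f y <= f q.
Proof.
  destruct (Hm (f p)) as [N HN].
  destruct (continuity_ab_maj f (Rmin p N) p (Rmin_l _ _) (fun c _ => Hc c)) as [q [Hq1 Hq2]].
  exists q; split; [lra|].
  intros y Hy. destruct (Rle_or_lt (Rmin p N) y) as [H|H].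
  - apply Hq1; lra.
  - assert (y < N) by (pose proof (Rmin_r p N); lra).
    specialize (HN y H0). assert (f p <= f q) by (apply Hq1; pose proof (Rmin_l p N); lra). lra.
Qed.

Lemma key c (Hext : forall p, is_local_extremum f p -> f p < c) x t :
  x < t -> f x < c \/ c < f t.
Proof.
  intros Hxt.
  destruct (Rlt_or_le (f x) c) as [H1|H1]; [now left|].
  destruct (Rlt_or_le c (f t)) as [H2|H2]; [now right|].
  exfalso.
  destruct (min_right t) as [p [Htp Hp']].
  destruct (max_left p) as [q [Hqp Hq]].
  assert (Hfq : f x <= f q) by (apply Hq; lra).
  assert (Hfp : f p <= f t) by (apply Hp'; lra).
  destruct (Rle_lt_or_eq_dec q p Hqp) as [Hlt|Heq].
  - assert (f q < c); [|lra].
    apply Hext. right. exists (p - q). split; [lra|].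
    intros y Hy. apply Hq. apply Rabs_def2 in Hy. lra.
  - subst q.
    destruct (Rle_lt_or_eq_dec t p Htp) as [Hlt|Heq].
    + assert (f p < c); [|lra].
      apply Hext. left. exists (p - t). split; [lra|].
      intros y Hy. apply Hp'. apply Rabs_def2 in Hy. lra.
    + subst p.
      assert (f x < c); [|lra].
      apply Hext. right. exists (t - x). split; [lra|].
      intros y Hy. apply Rabs_def2 in Hy.
      assert (f y <= f t) by (apply Hq; lra). lra.
Qed.

Lemma sign_high c (Hext : forall p, is_local_extremum f p -> f p < c) :
  exists ts, f ts = c /\ (forall t, t < ts -> f t < c) /\ (forall t, ts < t -> c < f t).
Proof.
  destruct (Hm c) as [N1 HN1]. destruct (Hp c) as [N2 HN2].
  set (a := Rmin N1 N2 - 1). set (b := Rmax N1 N2 + 1).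
  assert (Ha : f a - c < 0).
  { assert (f a < c); [|lra]. apply HN1. unfold a. pose proof (Rmin_l N1 N2). lra. }
  assert (Hb : 0 < f b - c).
  { assert (c < f b); [|lra]. apply HN2. unfold b. pose proof (Rmax_r N1 N2). lra. }
  assert (Hab : a < b).
  { unfold a, b. pose proof (Rmin_l N1 N2). pose proof (Rmax_l N1 N2). lra. }
  destruct (IVT (fun t => f t - c) a b) as [z [Hz1 Hz2]]; auto.
  { intros t. apply continuity_pt_minus; [apply Hc|apply continuity_pt_const; intros u v; reflexivity]. }
  exists z. split; [lra|]. split.
  - intros t Ht. destruct (key c Hext t z Ht); lra.
  - intros t Ht. destruct (key c Hext z t Ht); lra.
Qed.
End Gen.

Lemma sign_low (f : R -> R) (Hc : forall t, continuity_pt f t)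
  (Hm : forall A, exists N, forall x, x < N -> f x < A)
  (Hp : forall A, exists N, forall x, N < x -> A < f x)
  c (Hext : forall p, is_local_extremum f p -> c < f p) :
  exists ts, f ts = c /\ (forall t, t < ts -> f t < c) /\ (forall t, ts < t -> c < f t).
Proof.
  set (g := fun t => - f (- t)).
  destruct (sign_high g) with (c := - c) as [ts [H1 [H2 H3]]].
  - intros t. unfold g.
    apply (continuity_pt_opp (fun t => f (- t))).
    apply (continuity_pt_comp (fun t => - t) f). 
    + apply continuity_pt_opp. apply continuity_pt_id.
    + apply Hc.
  - intros A. destruct (Hp (- A)) as [N HN]. exists (- N). intros x Hx.
    unfold g. specialize (HN (- x) ltac:(lra)). lra.
  - intros A. destruct (Hm (- A)) as [N HN]. exists (- N). intros x Hx.
    unfold g. specialize (HN (- x) ltac:(lra)). lra.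
  - intros p Hp'. unfold g.
    assert (c < f (- p)); [|lra]. apply Hext.
    destruct Hp' as [[d [Hd Hy]]|[d [Hd Hy]]]; [right|left]; exists d; split; auto;
      intros y Hyd; specialize (Hy (- y)); unfold g in Hy;
      rewrite Ropp_involutive in Hy;
      (assert (Rabs (- y - p) < d) by (rewrite <- Rabs_Ropp; replace (- (- y - p)) with (y - - p) by ring; auto));
      specialize (Hy H); lra.
  - exists (- ts). split; [unfold g in H1; lra|]. split.
    + intros t Ht. specialize (H3 (- t) ltac:(lra)). unfold g in H3. rewrite Ropp_involutive in H3. lra.
    + intros t Ht. specialize (H2 (- t) ltac:(lra)). unfold g in H2. rewrite Ropp_involutive in H2. lra.
Qed.

Section Chi.
Variables psi dpsi : R -> R.
Hypothesis Hderiv : forall t : R, is_derive psi t (dpsi t).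
Hypothesis Hm : forall A, exists N, forall x, x < N -> dpsi x < A.
Hypothesis Hp : forall A, exists N, forall x, N < x -> A < dpsi x.

Lemma chi_der th t : derivable_pt_lim (chi psi th) t (dpsi t * sin th + cos th).
Proof.
  replace (dpsi t * sin th + cos th) with
    ((dpsi t * fct_cte (sin th) t + psi t * 0) + (1 * fct_cte (cos th) t + id t * 0))
    by (unfold fct_cte, id; ring).
  change (chi psi th) with (psi * fct_cte (sin th) + id * fct_cte (cos th))%F.
  apply derivable_pt_lim_plus; apply derivable_pt_lim_mult;
    try apply derivable_pt_lim_const; try apply derivable_pt_lim_id.
  apply is_derive_Reals, Hderiv.
Qed.

Lemma chi_props th (Hth : 0 < th < PI) ts
  (H1 : forall t, t < ts -> dpsi t < - cos th / sin th)
  (H2 : forall t, ts < t -> - cos th / sin th < dpsi t) :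
      is_lim (chi psi th) m_infty p_infty /\
      is_lim (chi psi th) p_infty p_infty /\
      (exists! t : R, is_local_min (chi psi th) t).
Proof.
  set (s := sin th). set (co := cos th). set (c := - co / s).
  assert (Hs : 0 < s) by (apply sin_gt_0; lra).
  set (h := chi psi th).
  assert (Hd : forall t, dpsi t * s + co = s * (dpsi t - c)).
  { intros t. unfold c. field. lra. }
  assert (MVT : forall a b, a < b -> exists xi, h b - h a = s * (dpsi xi - c) * (b - a) /\ a < xi < b).
  { intros a b Hab. destruct (MVT_cor2 h (fun t => dpsi t * s + co) a b Hab) as [xi [E Hxi]].
    - intros x _. apply chi_der.
    - exists xi. rewrite E, Hd. auto. }
  assert (Hdec : forall a b, a < b -> b <= ts -> h b < h a).
  { intros a b Hab Hb. destruct (MVT a b Hab) as [xi [E Hxi]].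
    assert (dpsi xi - c < 0) by (assert (dpsi xi < c) by (apply H1; lra); lra).
    assert (s * (dpsi xi - c) * (b - a) < 0).
    { apply Rmult_neg_pos; [|lra]. rewrite Rmult_comm. apply Rmult_neg_pos; lra. }
    lra. }
  assert (Hinc : forall a b, a < b -> ts <= a -> h a < h b).
  { intros a b Hab Hb. destruct (MVT a b Hab) as [xi [E Hxi]].
    assert (0 < dpsi xi - c) by (assert (c < dpsi xi) by (apply H2; lra); lra).
    assert (0 < s * (dpsi xi - c) * (b - a)) by (repeat apply Rmult_lt_0_compat; lra).
    lra. }
  split; [|split].
  - intros P [M HM]. simpl.
    destruct (Hm (c - 1)) as [N0 HN0].
    set (a := Rmin N0 ts - 1).
    assert (Ha1 : a < N0) by (unfold a; pose proof (Rmin_l N0 ts); lra).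
    assert (Ha2 : a < ts) by (unfold a; pose proof (Rmin_r N0 ts); lra).
    exists (a - Rabs (M - h a) / s). intros x Hx. apply HM.
    assert (Hq : 0 <= Rabs (M - h a) / s) by (apply Rdiv_le_0_compat; [apply Rabs_pos|lra]).
    assert (Hxa : x < a) by lra.
    destruct (MVT x a Hxa) as [xi [E Hxi]].
    assert (Hk : dpsi xi - c < - 1) by (assert (dpsi xi < c - 1) by (apply HN0; lra); lra).
    assert (Hk2 : s * (a - x) > Rabs (M - h a)).
    { assert (a - x > Rabs (M - h a) / s) by lra.
      apply Rmult_lt_compat_l with (r := s) in H; [|lra].
      replace (s * (Rabs (M - h a) / s)) with (Rabs (M - h a)) in H by (field; lra). lra. }
    assert (s * (dpsi xi - c) * (a - x) <= - (s * (a - x))).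
    { assert (0 < s * (a - x)) by (apply Rmult_lt_0_compat; lra). nra. }
    pose proof (Rle_abs (M - h a)). unfold h in *. lra.
  - intros P [M HM]. simpl.
    destruct (Hp (c + 1)) as [N0 HN0].
    set (a := Rmax N0 ts + 1).
    assert (Ha1 : N0 < a) by (unfold a; pose proof (Rmax_l N0 ts); lra).
    assert (Ha2 : ts < a) by (unfold a; pose proof (Rmax_r N0 ts); lra).
    exists (a + Rabs (M - h a) / s). intros x Hx. apply HM.
    assert (Hq : 0 <= Rabs (M - h a) / s) by (apply Rdiv_le_0_compat; [apply Rabs_pos|lra]).
    assert (Hxa : a < x) by lra.
    destruct (MVT a x Hxa) as [xi [E Hxi]].
    assert (Hk : 1 < dpsi xi - c) by (assert (c + 1 < dpsi xi) by (apply HN0; lra); lra).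
    assert (Hk2 : s * (x - a) > Rabs (M - h a)).
    { assert (x - a > Rabs (M - h a) / s) by lra.
      apply Rmult_lt_compat_l with (r := s) in H; [|lra].
      replace (s * (Rabs (M - h a) / s)) with (Rabs (M - h a)) in H by (field; lra). lra. }
    assert (s * (dpsi xi - c) * (x - a) >= s * (x - a)).
    { assert (0 < s * (x - a)) by (apply Rmult_lt_0_compat; lra). nra. }
    pose proof (Rle_abs (M - h a)). unfold h in *. lra.
  - exists ts. split.
    + exists 1. split; [lra|]. intros y _. fold h.
      destruct (Rtotal_order y ts) as [Hy|[Hy|Hy]].
      * left. apply Hdec; lra.
      * subst; lra.
      * left. apply Hinc; lra.
    + intros t [d [Hd0 Ht]]. fold h in Ht.
      destruct (Rtotal_order t ts) as [Hy|[Hy|Hy]]; auto; exfalso.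
      * set (y := t + Rmin d (ts - t) / 2).
        assert (0 < Rmin d (ts - t)) by (apply Rmin_pos; lra).
        pose proof (Rmin_l d (ts - t)). pose proof (Rmin_r d (ts - t)).
        assert (h y < h t) by (apply Hdec; unfold y; lra).
        assert (h t <= h y); [|lra]. apply Ht. unfold y. rewrite Rabs_right; lra.
      * set (y := t - Rmin d (t - ts) / 2).
        assert (0 < Rmin d (t - ts)) by (apply Rmin_pos; lra).
        pose proof (Rmin_l d (t - ts)). pose proof (Rmin_r d (t - ts)).
        assert (h y < h t) by (apply Hinc; unfold y; lra).
        assert (h t <= h y); [|lra]. apply Ht. unfold y. rewrite Rabs_left; lra.
Qed.
End Chi.
Lemma list_bound (f : R -> R) (l : list R) : exists B, 0 <= B /\ forall t, In t l -> Rabs (f t) <= B.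
Proof.
  induction l as [|a l [B [HB H]]].
  - exists 0. split; [lra|]. intros t [].
  - exists (Rmax B (Rabs (f a))). split; [pose proof (Rmax_l B (Rabs (f a))); lra|].
    intros t [<-|Ht]; [apply Rmax_r|]. pose proof (Rmax_l B (Rabs (f a))). specialize (H t Ht). lra.
Qed.

Lemma small_angle B th : 0 <= B -> 0 < th <= atan (/ (B + 1)) -> sin th * (B + 1) <= cos th.
Proof.
  intros HB [H0 H1].
  pose proof (atan_bound (/ (B + 1))) as [_ Hb].
  assert (Hc : 0 < cos th) by (apply cos_gt_0; lra).
  assert (Ht : tan th <= / (B + 1)).
  { rewrite <- (tan_atan (/ (B + 1))). destruct (Rle_lt_or_eq_dec _ _ H1) as [H|H].
    - left. apply tan_increasing; lra.
    - rewrite H; lra. }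
  unfold tan in Ht.
  assert (sin th = sin th / cos th * cos th) by (field; lra).
  assert (sin th / cos th * (B + 1) <= 1).
  { apply Rmult_le_compat_r with (r := B + 1) in Ht; [|lra].
    rewrite Rinv_l in Ht; lra. }
  rewrite H. nra.
Qed.

Theorem lemma3p2 (psi dpsi : R -> R)
  (Hderiv : forall t : R, is_derive psi t (dpsi t))
  (Hcont : forall t : R, continuous dpsi t)
  (Hlim_m : is_lim dpsi m_infty m_infty)
  (Hlim_p : is_lim dpsi p_infty p_infty)
  (Hfin : finitely_many_local_extrema dpsi) :
  exists theta0 theta1 : R,
    0 < theta0 /\ theta0 < theta1 /\ theta1 < PI /\
    forall theta : R, 0 < theta < PI -> ~ (theta0 < theta < theta1) ->
      is_lim (chi psi theta) m_infty p_infty /\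
      is_lim (chi psi theta) p_infty p_infty /\
      (exists! t : R, is_local_min (chi psi theta) t).
Proof.
  assert (Hm : forall A, exists N, forall x, x < N -> dpsi x < A).
  { intros A. apply (Hlim_m (fun y => y < A)). exists A. auto. }
  assert (Hp : forall A, exists N, forall x, N < x -> A < dpsi x).
  { intros A. apply (Hlim_p (fun y => A < y)). exists A. auto. }
  assert (Hc : forall t, continuity_pt dpsi t).
  { intros t. apply continuity_pt_filterlim. apply Hcont. }
  destruct Hfin as [l Hl].
  destruct (list_bound dpsi l) as [B [HB HBl]].
  assert (Hext : forall p, is_local_extremum dpsi p -> - B <= dpsi p <= B).
  { intros p Hp'. specialize (HBl p (Hl p Hp')). apply Rabs_le_between in HBl. lra. }
  set (t0 := atan (/ (B + 1))).
  assert (Ht0 : 0 < t0).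
  { unfold t0. rewrite <- atan_0. apply atan_increasing. apply Rinv_0_lt_compat. lra. }
  assert (Ht0' : t0 < PI / 2) by (apply atan_bound).
  exists t0, (PI - t0). split; [lra|]. split; [lra|]. split; [lra|].
  intros th Hth Hn.
  assert (Hs : 0 < sin th) by (apply sin_gt_0; lra).
  destruct (Rle_or_lt th t0) as [Hle|Hgt].
  - pose proof (small_angle B th HB (conj (proj1 Hth) Hle)) as Ha.
    assert (Hcb : - cos th / sin th <= - (B + 1)).
    { apply (Rmult_le_reg_r (sin th)); auto. unfold Rdiv. rewrite Rmult_assoc, Rinv_l; lra. }
    destruct (sign_low dpsi Hc Hm Hp (- cos th / sin th)) as [ts [_ [H1 H2]]].
    { intros p Hp'. specialize (Hext p Hp'). lra. }
    apply (chi_props psi dpsi Hderiv Hm Hp th Hth ts H1 H2).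
  - assert (Hge : PI - t0 <= th) by (destruct (Rle_or_lt (PI - t0) th); auto; exfalso; apply Hn; lra).
    pose proof (small_angle B (PI - th) HB ltac:(fold t0; lra)) as Ha.
    rewrite sin_PI_x, Rtrigo_facts.cos_pi_minus in Ha.
    assert (Hcb : B + 1 <= - cos th / sin th).
    { apply (Rmult_le_reg_r (sin th)); auto. unfold Rdiv. rewrite Rmult_assoc, Rinv_l; lra. }
    destruct (sign_high dpsi Hc Hm Hp (- cos th / sin th)) as [ts [_ [H1 H2]]].
    { intros p Hp'. specialize (Hext p Hp'). lra. }
    apply (chi_props psi dpsi Hderiv Hm Hp th Hth ts H1 H2).
Qed.
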